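(* In the setting of the context, for every $j\in[N]$, $s\in\Gamma$, $k\in[n]$ and $\dagger\in\{+,-\}$, one has $u^\dagger_k\le h^\dagger_k$ pointwise on $S_f^{sP}$.
   Context: Standing setting: $\Gamma$ countably infinite, $n\in\mathbb N$, $\mathbb Z\Gamma$ the integral group ring (product $(fg)_t=\sum_sf_{ts^{-1}}g_s$, involution $(f^* )_s=f_{s^{-1}}$, $(f^* )^{(km)}=(f^{(mk)})^*$). $f=M-g\in M_n(\mathbb Z\Gamma)$, $M=\mathrm{diag}(M_1,\dots,M_n)$ positive integers, $M_k>\sum_m\|g^{(km)}\|_1$, and a subsemigroup $P\subseteq\Gamma\setminus\{e_\Gamma\}$ containing all $\mathrm{supp}(g^{(km)})$; $\bar P=P\cup\{e_\Gamma\}$, $\bar M=\max_kM_k$, $S_f=\prod_k\{0,\dots,M_k-1\}$, $Y=S_f^\Gamma$ (row vectors, entries $y_{s,k}$, $(yF)_m=\sum_ky_kF^{(km)}$ by convolution). For $E\subseteq\Gamma$, $\pi_E:S_f^\Gamma\to S_f^E$ is the restriction. $N\ge\bar M\|(f^* )^{-1}\|_{1,\infty}$ fixed integer, $V=(\{-N,\dots,N\}^\Gamma)^n\setminus\{0\}$, $Z=\{(y,c)\in Y\times V:y+cf^*\in Y\}$, $\varphi:Y\times V\to Y$ the projection, $Z^+_{j,s,k}=\{(y,c)\in Z:\max_{t,m}|c_{t,m}|=c_{s,k}=j\}$, $Z^-_{j,s,k}=\{(y,c)\in Z:\max_{t,m}|c_{t,m}|=-c_{s,k}=j\}$. $A_k=\{(a,m):g^{(km)}_a\neq0\}$;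 for $B_k\subseteq A_k$, $\dagger\in\{+,-\}$ (signs $\pm1$), $Z^\dagger_{j,s,k,B_k}$ is the set of $(y,c)\in Z^\dagger_{j,s,k}$ with $c_{sa,m}=\dagger\mathrm{sgn}(g^{(km)}_a)j$ for $(a,m)\in B_k$ and $c_{sa,m}\neq\dagger\mathrm{sgn}(g^{(km)}_a)j$ for $(a,m)\in A_k\setminus B_k$; $Z^\dagger_{j,s,k,B_k,i}=\{(y,c)\in Z^\dagger_{j,s,k,B_k}:y_{s,k}=i\}$. Functions on $S_f^{sP}$: $u^\dagger_k=\sum_{i=0}^{M_k-1}\chi_{\pi_{sP}\varphi(\bigcup_{B_k\subseteq A_k}Z^\dagger_{j,s,k,B_k,i})}$ and $h^\dagger_k=\sum_{(a,m)\in A_k}|g^{(km)}_a|\,\chi_{\pi_{sa\bar P}\varphi(Z^{\dagger\mathrm{sgn}(g^{(km)}_a)}_{j,sa,m})\times S_f^{sP\setminus sa\bar P}}$ (note $sa\bar P\subseteq sP$ since $a\in P$; $Z^{\pm\cdot\pm}$ means $Z^+$ or $Z^-$ according to the product sign). *)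

(* Defs.v *)
From HB Require Import structures.
From mathcomp Require Import all_boot all_order all_algebra.
From mathcomp Require Import boolp classical_sets reals constructive_ereal ereal esum.
From mathcomp Require Import Rstruct.
From Stdlib Require Import Rdefinitions.
Local Notation R := Rdefinitions.R.

Set Implicit Arguments.
Unset Strict Implicit.
Unset Printing Implicit Defensive.

Import Order.TTheory GRing.Theory Num.Theory.
Local Open Scope ring_scope.

Record cgroup := CGroup {
  cg_sort :> countType;
  cg_mul : cg_sort -> cg_sort -> cg_sort;
  cg_inv : cg_sort -> cg_sort;
  cg_one : cg_sort;
  cg_mulA : associative cg_mul;
  cg_mul1g : left_id cg_one cg_mul;
  cg_mulg1 : right_id cg_one cg_mul;
  cg_mulVg : forall x, cg_mul (cg_inv x) x = cg_one;
  cg_mulgV : forall x, cg_mul x (cg_inv x) = cg_one;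
  cg_invK : forall x, cg_inv (cg_inv x) = x }.

Arguments cg_mul {c}.
Arguments cg_inv {c}.
Arguments cg_one {c}.

Section GroupRing.
Variable G : cgroup.
Local Notation "x ** y" := (cg_mul x y) (at level 40, left associativity).
Local Notation "x ^-1g" := (cg_inv x) (at level 3).
Local Notation e := (@cg_one G).

(* Elements of the integral group ring ZG: finitely supported functions
   G -> int, packaged with a finite list containing their support. *)
Record ZG := MkZG {
  zg_coef :> G -> int;
  zg_supp : seq G;
  zg_suppP : forall a, zg_coef a != 0 -> a \in zg_supp }.

(* support list without repetitions; the actual support is
   [seq a <- zg_usupp f | f a != 0] *)
Definition zg_usupp (f : ZG) : seq G := undup (zg_supp f).

Definition zg_norm1 (f : ZG) : nat := \sum_(a <- zg_usupp f) `|f a|%N.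

Lemma zg_delta_suppP (x : int) :
  forall a, (if a == e then x else 0) != 0 -> a \in [:: e].
Proof. by move=> a; rewrite inE; case: (a == e); rewrite ?eqxx. Qed.
Definition zg_delta (x : int) : ZG := MkZG (@zg_delta_suppP x).

Lemma zg_sub_suppP (f g : ZG) :
  forall a, f a - g a != 0 -> a \in zg_supp f ++ zg_supp g.
Proof.
move=> a; rewrite mem_cat; case Hf: (f a == 0).
  by move/eqP: Hf => ->; rewrite sub0r oppr_eq0 => /zg_suppP ->; rewrite orbT.
by rewrite (zg_suppP (negbT Hf)).
Qed.
Definition zg_sub (f g : ZG) : ZG := MkZG (@zg_sub_suppP f g).

Lemma zg_star_suppP (f : ZG) :
  forall a, f (a ^-1g) != 0 -> a \in map cg_inv (zg_supp f).
Proof.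
move=> a /zg_suppP H; apply/mapP; exists (a ^-1g) => //; by rewrite cg_invK.
Qed.
Definition zg_star (f : ZG) : ZG := MkZG (@zg_star_suppP f).

End GroupRing.

Section Setting.
Variables (Gam : cgroup) (n : nat).
Local Notation "x ** y" := (cg_mul x y) (at level 40, left associativity).
Local Notation "x ^-1g" := (cg_inv x) (at level 3).

Definition rvmul (y : Gam -> 'I_n -> int) (F : 'I_n -> 'I_n -> ZG Gam)
  (t : Gam) (m : 'I_n) : int :=
  \sum_(k < n) \sum_(s <- zg_usupp (F k m)) y (t ** s ^-1g) k * F k m s.

Definition fmat (M : 'I_n -> nat) (g : 'I_n -> 'I_n -> ZG Gam) k m : ZG Gam :=
  zg_sub (zg_delta Gam (if k == m then (M k)%:Z else 0)) (g k m).

Definition fstar (M : 'I_n -> nat) (g : 'I_n -> 'I_n -> ZG Gam) k m : ZG Gam :=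
  zg_star (fmat M g m k).

Definition l1norm (b : Gam -> R) : \bar R :=
  (\esum_(t in [set: Gam]) (`|b t|)%:E)%E.

(* products  A F  and  F A  for A in M_n(ZGam) and F in M_n(l^1 Gam):
   (A F)^{(km)}_t = sum_l sum_s A^{(kl)}_{t s^-1} F^{(lm)}_s
                  = sum_l sum_{r in supp A^{(kl)}} A^{(kl)}_r F^{(lm)}_{r^-1 t} *)
Definition zl_mul (A : 'I_n -> 'I_n -> ZG Gam) (F : 'I_n -> 'I_n -> Gam -> R)
  k m t : R :=
  \sum_(l < n) \sum_(r <- zg_usupp (A k l)) (A k l r)%:~R * F l m (r ^-1g ** t).
Definition lz_mul (F : 'I_n -> 'I_n -> Gam -> R) (A : 'I_n -> 'I_n -> ZG Gam)
  k m t : R :=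
  \sum_(l < n) \sum_(s <- zg_usupp (A l m)) F k l (t ** s ^-1g) * (A l m s)%:~R.
Definition l1_id (k m : 'I_n) (t : Gam) : R :=
  if (k == m) && (t == cg_one) then 1 else 0.

Definition is_l1_inverse (A : 'I_n -> 'I_n -> ZG Gam)
  (F : 'I_n -> 'I_n -> Gam -> R) : Prop :=
  (forall k m, (l1norm (F k m) < +oo)%E) /\
  (forall k m t, zl_mul A F k m t = l1_id k m t) /\
  (forall k m t, lz_mul F A k m t = l1_id k m t).

(* ||F||_{1,oo}: operator norm of y |-> yF on l^oo row vectors,
   i.e. max_m sum_k ||F^{(km)}||_1 *)
Definition norm1inf (F : 'I_n -> 'I_n -> Gam -> R) : \bar R :=
  (\big[Order.max/0%E]_(m < n) \sum_(k < n) l1norm (F k m))%E.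

Variables (M : 'I_n -> nat) (g : 'I_n -> 'I_n -> ZG Gam) (N : nat).

Definition inY (y : Gam -> 'I_n -> int) : Prop :=
  forall t k, 0 <= y t k < (M k)%:Z.

Definition inV (c : Gam -> 'I_n -> int) : Prop :=
  (forall t k, `|c t k| <= N%:Z) /\ exists t k, c t k != 0.

Definition inZ y c : Prop :=
  inY y /\ inV c /\ inY (fun t m => y t m + rvmul c (fstar M g) t m).

Definition Zdag (dag : int) (j : nat) (s : Gam) (k : 'I_n) y c : Prop :=
  inZ y c /\ (forall t m, `|c t m| <= j%:Z) /\ c s k = dag * j%:Z.

Definition ZdagB dag j s k (B : Gam -> 'I_n -> Prop) y c : Prop :=
  Zdag dag j s k y c /\
  forall a m, g k m a != 0 ->
    (B a m -> c (s ** a) m = dag * sgz (g k m a) * j%:Z) /\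
    (~ B a m -> c (s ** a) m != dag * sgz (g k m a) * j%:Z).

Definition ZdagBi dag j s k B (i : nat) y c : Prop :=
  ZdagB dag j s k B y c /\ y s k = i%:Z.

Variable P : Gam -> Prop.
Definition in_sP (s t : Gam) : Prop := exists p, P p /\ t = s ** p.
Definition in_sPbar (s t : Gam) : Prop := t = s \/ in_sP s t.

(* An element of S_f^{sP} is represented by x : Gam -> 'I_n -> int whose
   values on sP lie in S_f; its values off sP are irrelevant. *)

(* u^dag_k(x) = sum_{i<M_k} chi_{pi_{sP} phi (U_{B subset A_k} Z^dag_{j,s,k,B,i})}(x) *)
Definition u_fun dag j s k (x : Gam -> 'I_n -> int) : nat :=
  \sum_(i < M k)
    (asbool (exists y c,
       (exists B : Gam -> 'I_n -> Prop,
          (forall a m, B a m -> g k m a != 0) /\ ZdagBi dag j s k B i y c) /\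
       (forall t, in_sP s t -> forall m, y t m = x t m)) : nat).

(* h^dag_k(x) = sum_{(a,m) in A_k} |g^{(km)}_a|
     chi_{pi_{s a Pbar} phi (Z^{dag sgn(g^{(km)}_a)}_{j,sa,m}) x S_f^{sP \ saPbar}}(x) *)
Definition h_fun dag j s k (x : Gam -> 'I_n -> int) : nat :=
  \sum_(m < n) \sum_(a <- zg_usupp (g k m) | g k m a != 0)
    `|g k m a|%N *
    (asbool (exists y c,
       Zdag (dag * sgz (g k m a)) j (s ** a) m y c /\
       (forall t, in_sPbar (s ** a) t -> forall m', y t m' = x t m')) : nat).

End Setting.

(* Main.v *)
Require Import Defs.
From HB Require Import structures.
From mathcomp Require Import all_boot all_order all_algebra.
From mathcomp Require Import boolp classical_sets reals constructive_ereal ereal esum.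
From mathcomp Require Import Rstruct.
From mathcomp Require Import zify.
Import Order.TTheory GRing.Theory Num.Theory.
Local Open Scope ring_scope.

Lemma sum_sub (T : eqType) (L L2 : seq T) (F : T -> int) :
  uniq L -> uniq L2 -> {subset L <= L2} -> (forall t, F t != 0 -> t \in L) ->
  \sum_(t <- L2) F t = \sum_(t <- L) F t.
Proof.
move=> uL uL2 sub HF.
rewrite (bigID (mem L)) /= [X in _ + X]big1 ?addr0; last first.
  by move=> t tL; apply/eqP; exact: (contraNT (HF t)) tL.
rewrite -big_filter; apply: perm_big; apply: uniq_perm.
- exact: filter_uniq.
- done.
move=> t; rewrite mem_filter; apply/andP/idP => [[]//|tL]; split => //; exact: sub.
Qed.

Lemma sum_eq2 (T : eqType) (L1 L2 : seq T) (F : T -> int) :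
  uniq L1 -> uniq L2 -> (forall t, F t != 0 -> t \in L1) ->
  (forall t, F t != 0 -> t \in L2) ->
  \sum_(t <- L1) F t = \sum_(t <- L2) F t.
Proof.
move=> u1 u2 H1 H2.
rewrite -(@sum_sub _ L1 (undup (L1 ++ L2))) ?undup_uniq //; last first.
  by move=> t tL; rewrite mem_undup mem_cat tL.
rewrite -(@sum_sub _ L2 (undup (L1 ++ L2))) ?undup_uniq //.
by move=> t tL; rewrite mem_undup mem_cat tL orbT.
Qed.

Section S.
Variables (Gam : cgroup) (n : nat) (M : 'I_n -> nat) (g : 'I_n -> 'I_n -> ZG Gam).

Lemma rv_at (c : Gam -> 'I_n -> int) s k :
  rvmul c (fstar M g) s k = c s k * (M k)%:Z -
    \sum_(m < n) \sum_(a <- zg_usupp (g k m)) c (cg_mul s a) m * g k m a.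
Proof.
rewrite /rvmul.
have H : forall m, \sum_(t <- zg_usupp (fstar M g m k)) c (cg_mul s (cg_inv t)) m * fstar M g m k t
   = c s m * (if k == m then (M k)%:Z else 0) -
     \sum_(a <- zg_usupp (g k m)) c (cg_mul s a) m * g k m a.
  move=> m.
  pose L0 := undup (cg_one :: zg_supp (g k m)).
  have uL0 : uniq L0 by exact: undup_uniq.
  have injI : injective (@cg_inv Gam) by apply: (can_inj (@cg_invK Gam)).
  rewrite (@sum_eq2 _ _ (map cg_inv L0)); first last.
  - move=> t; apply: contraNT => tL.
    have : cg_inv t \notin L0.
      by apply: contra tL => H; apply/mapP; exists (cg_inv t); rewrite ?cg_invK.
    rewrite mem_undup /= => Hn.
    rewrite /fstar /fmat /= /zg_delta /=.
    move: Hn; rewrite inE negb_or => /andP [Hne Hns].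
    rewrite (negbTE Hne) sub0r.
    have -> : g k m (cg_inv t) = 0.
      by apply/eqP; apply: (contraNT (@zg_suppP _ (g k m) (cg_inv t))).
    by rewrite oppr0 mulr0.
  - move=> t Ht; rewrite mem_undup; apply: zg_suppP.
    by apply: contraNneq Ht => ->; rewrite mulr0.
  - by rewrite map_inj_uniq.
  - exact: undup_uniq.
  rewrite big_map.
  under eq_bigr => b _ do rewrite !cg_invK /fstar /fmat /= /zg_delta /= mulrBr.
  rewrite sumrB; congr (_ - _).
    rewrite (eq_bigr (fun b => if b == cg_one then c (cg_mul s b) m * (if k == m then (M k)%:Z else 0) else 0)); last by move=> b _; rewrite cg_invK; case: (b == cg_one); rewrite ?mulr0.
    rewrite -big_mkcond -big_filter filter_pred1_uniq //; last by rewrite mem_undup inE eqxx.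
    by rewrite big_seq1 cg_mulg1.
  under eq_bigr => b _ do rewrite cg_invK.
  apply: sum_eq2; [exact: undup_uniq|exact: undup_uniq| |].
  - move=> t Ht; rewrite mem_undup inE; apply/orP; right; apply: zg_suppP.
    by apply: contraNneq Ht => ->; rewrite mulr0.
  - move=> t Ht; rewrite mem_undup; apply: zg_suppP.
    by apply: contraNneq Ht => ->; rewrite mulr0.
rewrite (eq_bigr _ (fun m _ => H m)) sumrB; congr (_ - _).
rewrite (bigD1 k) //= eqxx big1 ?addr0 // => m /negbTE.
by rewrite eq_sym => ->; rewrite mulr0.
Qed.
End S.
Lemma sum_bool_le m (F : 'I_m -> bool) : (\sum_(i < m) F i <= m)%N.
Proof.
rewrite -[X in (_ <= X)%N]card_ord -sum1_card.
by apply: leq_sum => i _; case: (F i).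
Qed.

Lemma count_lt m h (F : 'I_m -> bool) :
  (forall i : 'I_m, F i -> i < h)%N -> (\sum_(i < m) F i <= h)%N.
Proof.
elim: m F => [|m IH] F HF; first by rewrite big_ord0.
rewrite big_ord_recr /=.
case E: (F ord_max).
  have Hm : (m < h)%N by exact: (HF _ E).
  have := @sum_bool_le m (fun i => F (widen_ord (leqnSn m) i)).
  by move=> H; rewrite addn1; apply: leq_ltn_trans H Hm.
rewrite addn0; apply: IH => i Hi; exact: (HF _ Hi).
Qed.

Lemma count_ge m h (F : 'I_m -> bool) :
  (forall i : 'I_m, F i -> m <= i + h)%N -> (\sum_(i < m) F i <= h)%N.
Proof.
move=> HF; rewrite (reindex_inj rev_ord_inj) /=.
apply: count_lt => i /HF; rewrite /= => H.
have := ltn_ord i; lia.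
Qed.

Theorem lemma4p6
  (Gam : cgroup)
  (* Gam is (countable and) infinite *)
  (Gam_inf : forall s : seq Gam, exists t, t \notin s)
  (n : nat) (M : 'I_n -> nat) (g : 'I_n -> 'I_n -> ZG Gam)
  (M_pos : forall k, (0 < M k)%N)
  (M_dom : forall k, (\sum_(m < n) zg_norm1 (g k m) < M k)%N)
  (P : Gam -> Prop)
  (P_semigroup : forall p q, P p -> P q -> P (cg_mul p q))
  (P_noe : ~ P cg_one)
  (P_supp : forall k m a, g k m a != 0 -> P a)
  (N : nat)
  (N_big : exists F, is_l1_inverse (fstar M g) F /\
     (((\max_(k < n) M k)%:R)%:E * norm1inf F <= (N%:R)%:E)%E)
  (j : nat) (Hj : (1 <= j <= N)%N) (s : Gam) (k : 'I_n)
  (dag : int) (Hdag : dag = 1 \/ dag = -1)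
  (x : Gam -> 'I_n -> int)
  (Hx : forall t, in_sP P s t -> forall m, 0 <= x t m < (M m)%:Z) :
  (u_fun M g N P dag j s k x <= h_fun M g N P dag j s k x)%N.
Proof.
set h := h_fun M g N P dag j s k x.
pose Ind (m : 'I_n) (a : Gam) : bool := asbool (exists y c,
       Zdag M g N (dag * sgz (g k m a)) j (cg_mul s a) m y c /\
       (forall t, in_sPbar P (cg_mul s a) t -> forall m', y t m' = x t m')).
have hZ : (h%:Z) = \sum_(m < n) \sum_(a <- zg_usupp (g k m)) (`|g k m a|%N * Ind m a)%N%:Z.
  rewrite /h /h_fun (big_morph Posz PoszD (erefl _)); apply: eq_bigr => m _.
  rewrite (big_morph Posz PoszD (erefl _)) big_mkcond; apply: eq_bigr => a _.
  by case: ifP => // /negbFE /eqP ->.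
have WZ : ((\sum_(m < n) zg_norm1 (g k m))%N%:Z) = \sum_(m < n) \sum_(a <- zg_usupp (g k m)) (`|g k m a|%N)%:Z.
  rewrite (big_morph Posz PoszD (erefl _)); apply: eq_bigr => m _.
  by rewrite /zg_norm1 (big_morph Posz PoszD (erefl _)).
have key : forall i : 'I_(M k), (exists y c,
       (exists B : Gam -> 'I_n -> Prop,
          (forall a m, B a m -> g k m a != 0) /\ ZdagBi M g N dag j s k B i y c) /\
       (forall t, in_sP P s t -> forall m, y t m = x t m)) ->
    (dag = 1 -> (i < h)%N) /\ (dag = -1 -> (M k <= i + h)%N).
  move=> i [y [c [[B [_ [[[HZ [Hb Hcs]] _] Hi]]] Hag]]].
  case: HZ => HY [HV HY2].
  have := HY2 s k; rewrite rv_at Hcs Hi.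
  set T := \sum_(m < n) _.
  have HT : dag * T <= (j%:Z - 1) * (\sum_(m < n) zg_norm1 (g k m))%N%:Z + h%:Z.
    rewrite WZ hZ /T mulr_sumr mulr_sumr -big_split /=; apply: ler_sum => m _.
    rewrite mulr_sumr mulr_sumr -big_split /=; apply: ler_sum => a _.
    have Himp : c (cg_mul s a) m = dag * sgz (g k m a) * j%:Z -> g k m a != 0 -> Ind m a.
      move=> Hc Hg; apply/asboolP; exists y, c; split.
        split; [by split|split; [exact: Hb|exact: Hc]].
      move=> t [->|[p [Pp ->]]] m'; apply: Hag.
        by exists a; split => //; exact: P_supp Hg.
      by exists (cg_mul a p); split; [apply: P_semigroup => //; exact: P_supp Hg|rewrite cg_mulA].
    have Hc := Hb (cg_mul s a) m.
    move: Himp; case: (Ind m a) => Himp.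
      case: Hdag => Hd; rewrite Hd in Himp *; case: (sgzP (g k m a)) Himp => Hg Himp; nia.
    have Hne : g k m a != 0 -> c (cg_mul s a) m != dag * sgz (g k m a) * j%:Z.
      by move=> Hg; apply/eqP => E; have := Himp E Hg.
    clear Himp.
    case: Hdag => Hd; rewrite Hd in Hne *; case: (sgzP (g k m a)) Hne => Hg Hne; nia.
  move=> H2; have HW := M_dom k.
  have Hjm : (j%:Z - 1) * (\sum_(m < n) zg_norm1 (g k m))%N%:Z <= (j%:Z - 1) * (M k)%:Z.
    apply: ler_wpM2l; first lia.
    by rewrite lez_nat ltnW.
  by split => Hd; rewrite Hd in HT H2; nia.
rewrite /u_fun; case: Hdag => Hd.
  by apply: count_lt => i /asboolP /key [H _]; exact: H Hd.
by apply: count_ge => i /asboolP /key [_ H]; exact: H Hd.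
Qed.
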